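(* For integers $N\ge1$, $m,n$: $$\tau^{m,n}_N(t)=\prod_{k=1}^{N-1}\Big(\frac{q^{n+k-1}b_3}{q^{n+k-1}b_3-1}\Big)^{N-k}\det\big[\widetilde\Psi_{m,n}(t),\widetilde\Psi_{m,n}(qt),\dots,\widetilde\Psi_{m,n}(q^{N-1}t)\big]$$ $$=\prod_{k=1}^{N-1}\Big(\frac{q^{m-k+1}b_1}{q^{m-k+1}b_1-1}\Big)^{N-k}\det\big[\check\Psi_{m,n}(t),\check\Psi_{m,n+1}(t),\dots,\check\Psi_{m,n+N-1}(t)\big]$$ $$=(-1)^{N(N-1)/2}\prod_{k=1}^{N-1}(q^{n+k-1}b_3)^{N-k}\prod_{k=1}^{N-1}\Big(\frac{q^{m-k+1}b_1}{q^{m-k+1}b_1-1}\Big)^{N-k}\det\big[\widehat\Psi_{m,n}(t),\widehat\Psi_{m,n+1}(q^{-1}t),\dots,\widehat\Psi_{m,n+N-1}(q^{-N+1}t)\big].$$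
   Context: $q$ is a fixed nonzero complex constant (generic), $b_1,b_3$ generic parameters with $q^jb_1\neq1$, $q^jb_3\ne1$ for all integers $j$. $\psi(t,b_1,b_3)$ is a function of three variables satisfying, for all values of its arguments: (R1) $\psi(qt,b_1,b_3)=b_1\psi(t,b_1,b_3)+(1-b_1)\psi(qt,b_1/q,b_3)$, (R2) $b_3\psi(qt,b_1,b_3)=\psi(t,b_1,b_3)+(b_3-1)\psi(t,b_1,qb_3)$, (R3) $qtb_1b_3\psi(qt,b_1,b_3)=(qtb_1-1)\psi(t,b_1,b_3)+\psi(t,qb_1,b_3)$, (R4) $qt\psi(qt,b_1,b_3)=(qtb_1-1)\psi(t,b_1,b_3)+\psi(qt,b_1,b_3/q)$. $\tau^{m,n}_N(t)=\det\big(\psi(t,q^{m-j+1}b_1,q^{n+i-1}b_3)\big)_{i,j=1}^N$. Column vectors of height $N$: $\widetilde\Psi_{m,n}(t)$ has $i$-th entry $\psi(t,q^{m-i+1}b_1,q^nb_3)$; $\check\Psi_{m,n}(t)$ has $i$-th entry $\psi(q^{-i+1}t,q^mb_1,q^nb_3)$; $\widehat\Psi_{m,n}(t)$ has $i$-th entry $\psi(q^{i-1}t,q^mb_1,q^nb_3)$ ($i=1,\dots,N$). *)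

(* Defs.v *)
From HB Require Import structures.
From mathcomp Require Import all_boot all_order all_algebra.
From mathcomp Require Import complex reals.
Set Implicit Arguments. Unset Strict Implicit. Unset Printing Implicit Defensive.
Import Order.TTheory GRing.Theory Num.Theory.
Local Open Scope ring_scope.

Section Defs.
Variable R : realType.
Local Notation C := R[i].

(* The four contiguity relations (R1)-(R4), required for all values of t, b1, b3. *)
Definition psi_relations (q : C) (psi : C -> C -> C -> C) : Prop :=
  forall t b1 b3 : C,
    [/\ psi (q * t) b1 b3 = b1 * psi t b1 b3 + (1 - b1) * psi (q * t) (b1 / q) b3,
        b3 * psi (q * t) b1 b3 = psi t b1 b3 + (b3 - 1) * psi t b1 (q * b3),
        q * t * b1 * b3 * psi (q * t) b1 b3
          = (q * t * b1 - 1) * psi t b1 b3 + psi t (q * b1) b3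
      & q * t * psi (q * t) b1 b3
          = (q * t * b1 - 1) * psi t b1 b3 + psi (q * t) b1 (b3 / q)].

(* Indices i, j : 'I_N are 0-based: the paper's row/column index is i+1, j+1. *)

Definition tau (q b1 b3 : C) (psi : C -> C -> C -> C) (N : nat) (m n : int) (t : C) : C :=
  \det (\matrix_(i < N, j < N)
          psi t (q ^ (m - (j : nat)%:Z) * b1) (q ^ (n + (i : nat)%:Z) * b3)).

Definition Psi_tilde (q b1 b3 : C) (psi : C -> C -> C -> C) (N : nat) (m n : int) (t : C)
  : 'cV[C]_N :=
  \col_(i < N) psi t (q ^ (m - (i : nat)%:Z) * b1) (q ^ n * b3).

Definition Psi_check (q b1 b3 : C) (psi : C -> C -> C -> C) (N : nat) (m n : int) (t : C)
  : 'cV[C]_N :=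
  \col_(i < N) psi (q ^ (- (i : nat)%:Z) * t) (q ^ m * b1) (q ^ n * b3).

Definition Psi_hat (q b1 b3 : C) (psi : C -> C -> C -> C) (N : nat) (m n : int) (t : C)
  : 'cV[C]_N :=
  \col_(i < N) psi (q ^ ((i : nat)%:Z) * t) (q ^ m * b1) (q ^ n * b3).

Definition M_tilde q b1 b3 psi N m n t : 'M[C]_N :=
  \matrix_(i < N, j < N) Psi_tilde q b1 b3 psi N m n (q ^+ j * t) i ord0.

Definition M_check q b1 b3 psi N m n t : 'M[C]_N :=
  \matrix_(i < N, j < N) Psi_check q b1 b3 psi N m (n + (j : nat)%:Z) t i ord0.

Definition M_hat q b1 b3 psi N m n t : 'M[C]_N :=
  \matrix_(i < N, j < N)
     Psi_hat q b1 b3 psi N m (n + (j : nat)%:Z) (q ^ (- (j : nat)%:Z) * t) i ord0.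

End Defs.

(* Main.v *)
Require Import Defs.
From HB Require Import structures.
From mathcomp Require Import all_boot all_order all_algebra.
From mathcomp Require Import complex reals.
From mathcomp Require Import ring zify.
Import Order.TTheory GRing.Theory Num.Theory.
Local Open Scope ring_scope.

Section Gen.
Variable F : fieldType.
Local Set Implicit Arguments.

Definition inspan N (B : 'M[F]_N) (P : pred nat) (v : 'cV[F]_N) :=
  exists u : 'cV[F]_N, v = B *m u /\ forall l : 'I_N, ~~ P l -> u l 0 = 0.

Lemma inspan0 N (B : 'M[F]_N) P : inspan B P 0.
Proof. by exists 0; split; [rewrite mulmx0 | move=> l _; rewrite mxE]. Qed.

Lemma inspanD N (B : 'M[F]_N) P v w : inspan B P v -> inspan B P w -> inspan B P (v + w).
Proof.
move=> [u [-> Hu]] [u' [-> Hu']]; exists (u + u'); split; first by rewrite mulmxDr.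
by move=> l Hl; rewrite mxE Hu // Hu' // addr0.
Qed.

Lemma inspanZ N (B : 'M[F]_N) P a v : inspan B P v -> inspan B P (a *: v).
Proof.
move=> [u [-> Hu]]; exists (a *: u); split; first by rewrite scalemxAr.
by move=> l Hl; rewrite mxE Hu // mulr0.
Qed.

Lemma inspan_mono N (B : 'M[F]_N) (P Q : pred nat) v :
  (forall l, P l -> Q l) -> inspan B P v -> inspan B Q v.
Proof.
move=> PQ [u [-> Hu]]; exists u; split => // l Hl; apply: Hu.
by apply/negP => /PQ; apply/negP.
Qed.

Lemma inspan_col N (B : 'M[F]_N) (P : pred nat) (k : 'I_N) : P k -> inspan B P (col k B).
Proof.
move=> Pk; exists (delta_mx k 0); split; first by rewrite colE.
move=> l Hl; rewrite mxE; case: eqP => [Ek|] //=.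
by rewrite Ek Pk in Hl.
Qed.

Lemma det_tri_gen N (A B : 'M[F]_N) (d : 'I_N -> F) (up : bool) :
  (forall k : 'I_N, inspan B (fun l => if up then (l < k)%N else (k < l)%N)
                       (col k A - d k *: col k B)) ->
  \det A = (\prod_k d k) * \det B.
Proof.
move=> H.
have H' : forall k : 'I_N, exists u : 'cV[F]_N,
   [&& col k A == B *m u, u k 0 == d k &
       [forall l : 'I_N, (if up then (k < l)%N else (l < k)%N) ==> (u l 0 == 0)]].
  move=> k; have [u [Eu Hu]] := H k.
  exists (u + d k *: delta_mx k 0); apply/and3P; split.
  - by rewrite mulmxDr -scalemxAr -colE -Eu subrK.
  - have Pk : ~~ (if up then (k < k)%N else (k < k)%N) by rewrite if_same ltnn.
    by rewrite !mxE eqxx mulr1 Hu // add0r.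
  - apply/forallP => l; apply/implyP => Hl.
    have lk : l != k by apply/eqP => E; move: Hl; rewrite E if_same ltnn.
    rewrite !mxE (negbTE lk) /= mulr0 addr0 Hu //.
    by case: up Hl {H Eu Hu lk} => /= Hl; rewrite -leqNgt ltnW.
move: H H'; case: up => H H'.
pose U := \matrix_(l, k) (xchoose (H' k)) l 0.
have EA : A = B *m U.
  apply/matrixP => i k; have /and3P [/eqP E1 _ _] := xchooseP (H' k).
  have := congr1 (fun M : 'cV[F]_N => M i 0) E1; rewrite !mxE => ->.
  by apply: eq_bigr => l _; rewrite mxE.
rewrite EA det_mulmx mulrC; congr (_ * _).
have diagU : forall k, U k k = d k.
  by move=> k; rewrite mxE; have /and3P [_ /eqP -> _] := xchooseP (H' k).
- rewrite -det_tr det_trig; first by apply: eq_bigr => k _; rewrite mxE diagU.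
  apply/forallP => i; apply/forallP => j; apply/implyP => ij; rewrite !mxE.
  by have /and3P [_ _ /forallP /(_ j) /implyP /(_ ij) /eqP ->] := xchooseP (H' i).
pose U := \matrix_(l, k) (xchoose (H' k)) l 0.
have EA : A = B *m U.
  apply/matrixP => i k; have /and3P [/eqP E1 _ _] := xchooseP (H' k).
  have := congr1 (fun M : 'cV[F]_N => M i 0) E1; rewrite !mxE => ->.
  by apply: eq_bigr => l _; rewrite mxE.
rewrite EA det_mulmx mulrC; congr (_ * _).
have diagU : forall k, U k k = d k.
  by move=> k; rewrite mxE; have /and3P [_ /eqP -> _] := xchooseP (H' k).
- rewrite det_trig; first by apply: eq_bigr => k _; rewrite diagU.
  apply/forallP => i; apply/forallP => j; apply/implyP => ij; rewrite !mxE.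
  by have /and3P [_ _ /forallP /(_ i) /implyP /(_ ij) /eqP ->] := xchooseP (H' j).
Qed.


Lemma L12 N (B : 'M[F]_N) (G : nat -> nat -> 'cV[F]_N) (al be : nat -> F) :
  (forall a (Ha : (a < N)%N), G a 0%N = col (Ordinal Ha) B) ->
  (forall a k, G a k.+1 = al k *: G a.+1 k + be k *: G a k) ->
  \det (\matrix_(i < N, j < N) G 0%N j i 0) = (\prod_(k < N) \prod_(l < k) al l) * \det B.
Proof.
move=> H0 HS.
have key : forall k a, (a + k < N)%N ->
  inspan B (fun l => (l < a + k)%N) (G a k - (\prod_(l < k) al l) *: G (a + k)%N 0%N).
  elim=> [|k IH] a Ha.
    by rewrite big_ord0 scale1r addn0 subrr; apply: inspan0.
  have Ha1 : (a.+1 + k < N)%N by rewrite addSnnS.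
  have Ha2 : (a + k < N)%N by apply: leq_trans Ha; rewrite ltnW // addnS.
  have E : G a k.+1 - (\prod_(l < k.+1) al l) *: G (a + k.+1)%N 0%N =
     al k *: (G a.+1 k - (\prod_(l < k) al l) *: G (a.+1 + k)%N 0%N)
     + be k *: (G a k - (\prod_(l < k) al l) *: G (a + k)%N 0%N)
     + (be k * \prod_(l < k) al l) *: G (a + k)%N 0%N.
    rewrite HS big_ord_recr /= addSnnS.
    apply/matrixP => i j; rewrite !mxE; ring.
  rewrite E; apply: inspanD; first apply: inspanD.
  - by apply: inspanZ; rewrite -addSnnS; apply: IH.
  - apply: inspanZ; apply: inspan_mono (IH a Ha2) => l /= Hl.
    by apply: leq_trans Hl _; rewrite addnS.
  - apply: inspanZ; rewrite (H0 _ Ha2); apply: inspan_col => /=.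
    by rewrite addnS.
apply: (det_tri_gen _ true) => k /=.
have -> : col k (\matrix_(i < N, j < N) G 0%N j i 0) = G 0%N k.
  by apply/matrixP => i j; rewrite !mxE ord1.
have := key k 0%N; rewrite add0n => /(_ (ltn_ord k)).
rewrite (H0 _ (ltn_ord k)).
by have -> : Ordinal (ltn_ord k) = k by apply: val_inj.
Qed.

Lemma L3 N (B : 'M[F]_N) (G : nat -> nat -> 'cV[F]_N) (ga : nat -> nat -> F) :
  (forall a (Ha : (a < N)%N), G 0%N a = col (Ordinal Ha) B) ->
  (forall p j, G p.+1 j = G p j + ga p j *: G p j.+1) ->
  \det (\matrix_(i < N, j < N) G (N.-1 - j)%N j i 0) = \det B.
Proof.
move=> H0 HS.
have key : forall p j, (j + p < N)%N ->
  inspan B (fun l => (j < l)%N) (G p j - G 0%N j).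
  elim=> [|p IH] j Hj.
    by rewrite subrr; apply: inspan0.
  have Hj1 : (j.+1 + p < N)%N by rewrite addSnnS.
  have Hj2 : (j + p < N)%N by apply: leq_trans Hj; rewrite ltnW // addnS.
  have Hj3 : (j.+1 < N)%N by apply: leq_ltn_trans Hj1; rewrite leq_addr.
  have E : G p.+1 j - G 0%N j =
     (G p j - G 0%N j) + ga p j *: (G p j.+1 - G 0%N j.+1) + ga p j *: G 0%N j.+1.
    rewrite HS; apply/matrixP => i k; rewrite !mxE; ring.
  rewrite E; apply: inspanD; first apply: inspanD.
  - by apply: IH.
  - apply: inspanZ; apply: inspan_mono (IH _ Hj1) => l /= Hl.
    by apply: ltn_trans Hl.
  - apply: inspanZ; rewrite (H0 _ Hj3); by apply: inspan_col => /=.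
transitivity ((\prod_(k < N) (1:F)) * \det B); last by rewrite big1 ?mul1r.
apply: (det_tri_gen _ false) => k /=.
have -> : col k (\matrix_(i < N, j < N) G (N.-1 - j)%N j i 0) = G (N.-1 - k)%N k.
  by apply/matrixP => i j; rewrite !mxE ord1.
have hk : (k + (N.-1 - k) < N)%N by have := ltn_ord k; lia.
have := key _ _ hk; rewrite (H0 _ (ltn_ord k)) scale1r.
by have -> : Ordinal (ltn_ord k) = k by apply: val_inj.
Qed.


Definition revmx N : 'M[F]_N := \matrix_(i < N, j < N) ((i + j).+1 == N)%:R.

Lemma det_revmx N : \det (revmx N) = (-1) ^+ ((N * (N - 1)) %/ 2).
Proof.
elim: N => [|N IH]; first by rewrite det_mx00.
rewrite (expand_det_row _ ord0) (bigD1 ord_max) //= big1; last first.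
  move=> j /negbTE jm; rewrite !mxE /= add0n eqSS.
  have -> : (j == N :> nat) = false by rewrite -jm; apply/eqP/eqP => [E|->//]; apply: val_inj.
  by rewrite mul0r.
rewrite addr0 !mxE /= add0n eqxx mul1r /cofactor.
have -> : row' ord0 (col' ord_max (revmx N.+1)) = revmx N.
  by apply/matrixP => i j; rewrite !mxE /= /bump /= add1n leqNgt (ltn_ord j) add0n addSn.
rewrite /= IH -exprD add0n; congr (_ ^+ _).
have : (N.+1 * (N.+1 - 1) = N * (N - 1) + N.*2)%N by rewrite -muln2; nia.
move=> ->; rewrite -muln2 divnDr ?dvdn_mull // mulnK //.
by rewrite addnC.
Qed.

Lemma revmx_mul N (A : 'M[F]_N) :
  revmx N *m A = \matrix_(i, j) A (rev_ord i) j.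
Proof.
apply/matrixP => i j; rewrite !mxE (bigD1 (rev_ord i)) //= big1.
  rewrite !mxE /= (_ : (i + (N - i.+1)).+1 = N) ?eqxx ?mul1r ?addr0 //; have := ltn_ord i; lia.
move=> k kn; rewrite !mxE; case: eqP => [E|]; last by rewrite mul0r.
case/negP: kn; apply/eqP/val_inj => /=; have := ltn_ord i; lia.
Qed.

Lemma prod_tri N (f : nat -> F) :
  \prod_(k < N) \prod_(l < k) f l = \prod_(l < N) f l ^+ (N - l.+1).
Proof.
elim: N => [|N IH]; first by rewrite !big_ord0.
rewrite big_ord_recr /= IH [in RHS]big_ord_recr /= subnn expr0 mulr1 -big_split /=.
apply: eq_bigr => i _; rewrite -exprSr; congr (_ ^+ _).
have := ltn_ord i; lia.
Qed.

Lemma reindex_prod N (f g : nat -> F) : (forall l, g l.+1 = f l) ->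
  \prod_(l < N) f l ^+ (N - l.+1) = \prod_(1 <= k < N) g k ^+ (N - k).
Proof.
case: N => [|N] Hfg; first by rewrite big_ord0 big_geq.
rewrite big_add1 /= big_mkord big_ord_recr /= subnn expr0 mulr1.
by apply: eq_bigr => i _; rewrite Hfg.
Qed.

End Gen.

Section Main.
Variable R : realType.
Local Notation C := R[i].
Variables (q b1 b3 : C) (psi : C -> C -> C -> C).
Hypothesis hq : q != 0.
Hypothesis hb1 : forall j : int, q ^ j * b1 != 1.
Hypothesis hb3 : forall j : int, q ^ j * b3 != 1.
Hypothesis hpsi : psi_relations q psi.

Lemma qU : q \is a GRing.unit. Proof. by rewrite unitfE. Qed.

Lemma qz (z w v : int) : v = z + w -> q ^ v = q ^ z * q ^ w.
Proof. by move=> ->; rewrite exprzDr // qU. Qed.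

Lemma qmul (z w : int) (x : C) : w = z + 1 -> q * (q ^ z * x) = q ^ w * x.
Proof. by move=> ->; rewrite (@qz z 1 (z + 1)) // expr1z mulrA [q * _]mulrC. Qed.

Lemma qcong (z w : int) (x : C) : z = w -> q ^ z * x = q ^ w * x.
Proof. by move=> ->. Qed.

Lemma sub1_neq0 (x : C) : x != 1 -> x - 1 != 0.
Proof. by rewrite subr_eq0. Qed.

Lemma part1 N (m n : int) (t : C) :
  \det (\matrix_(i < N, j < N)
          psi t (q ^ (m - (j : nat)%:Z) * b1) (q ^ (n + (i : nat)%:Z) * b3))
  = (\prod_(k < N) \prod_(l < k) ((q ^ (n + l%:Z) * b3) / (q ^ (n + l%:Z) * b3 - 1)))
    * \det (M_tilde q b1 b3 psi N m n t).
Proof.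
set G := fun (a k : nat) => \col_(j < N) psi (q ^+ a * t) (q ^ (m - (j : nat)%:Z) * b1)
                                                 (q ^ (n + k%:Z) * b3).
rewrite -det_tr.
have -> : (\matrix_(i < N, j < N)
          psi t (q ^ (m - (j : nat)%:Z) * b1) (q ^ (n + (i : nat)%:Z) * b3))^T
      = \matrix_(i < N, j < N) G 0%N j i 0.
  by apply/matrixP => i j; rewrite !mxE expr0 mul1r.
apply: (@L12 _ N (M_tilde q b1 b3 psi N m n t) G (fun k : nat => (q ^ (n + k%:Z) * b3) / (q ^ (n + k%:Z) * b3 - 1)) (fun k => - 1 / (q ^ (n + k%:Z) * b3 - 1))).
  by move=> a Ha; apply/matrixP => i j; rewrite !mxE addr0.
move=> a k; apply/matrixP => i j; rewrite !mxE.
set c := q ^ (n + k%:Z) * b3.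
have cne : c - 1 != 0 by apply: sub1_neq0; apply: hb3.
case: (hpsi (q ^+ a * t) (q ^ (m - (i : nat)%:Z) * b1) c) => _ E2 _ _.
rewrite (@qmul (n + k%:Z) (n + (k.+1)%:Z)) in E2; last lia.
rewrite mulrA -exprS in E2.
have -> : psi (q ^+ a * t) (q ^ (m - (i : nat)%:Z) * b1) (q ^ (n + (k.+1)%:Z) * b3)
   = (c * psi (q ^+ a.+1 * t) (q ^ (m - (i : nat)%:Z) * b1) c
        - psi (q ^+ a * t) (q ^ (m - (i : nat)%:Z) * b1) c) / (c - 1).
  by rewrite E2; field.
by field.
Qed.

Lemma qdiv (z w : int) (x : C) : z = w + 1 -> q ^ z * x / q = q ^ w * x.
Proof. by move=> ->; rewrite (@qz w 1 (w + 1)) // expr1z; field. Qed.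

Lemma part2 N (m n : int) (t : C) :
  \det (\matrix_(i < N, j < N)
          psi t (q ^ (m - (j : nat)%:Z) * b1) (q ^ (n + (i : nat)%:Z) * b3))
  = (\prod_(k < N) \prod_(l < k) ((q ^ (m - l%:Z) * b1) / (q ^ (m - l%:Z) * b1 - 1)))
    * \det (M_check q b1 b3 psi N m n t).
Proof.
set G := fun (a k : nat) => \col_(r < N) psi (q ^ (- (a%:Z)) * t) (q ^ (m - k%:Z) * b1)
                                                 (q ^ (n + (r : nat)%:Z) * b3).
rewrite -(det_tr (M_check q b1 b3 psi N m n t)).
have -> : (\matrix_(i < N, j < N)
          psi t (q ^ (m - (j : nat)%:Z) * b1) (q ^ (n + (i : nat)%:Z) * b3))
      = \matrix_(i < N, j < N) G 0%N j i 0.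
  by apply/matrixP => i j; rewrite !mxE oppr0 expr0z mul1r.
apply: (@L12 _ N (M_check q b1 b3 psi N m n t)^T G
   (fun k : nat => (q ^ (m - k%:Z) * b1) / (q ^ (m - k%:Z) * b1 - 1))
   (fun k => - 1 / (q ^ (m - k%:Z) * b1 - 1))).
  by move=> a Ha; apply/matrixP => i j; rewrite !mxE subr0.
move=> a k; apply/matrixP => i j; rewrite !mxE.
set c := q ^ (m - k%:Z) * b1.
have cne : c - 1 != 0 by apply: sub1_neq0; apply: hb1.
case: (hpsi (q ^ (- (a.+1)%:Z) * t) c (q ^ (n + (i : nat)%:Z) * b3)) => E1 _ _ _.
rewrite (@qmul (- (a.+1)%:Z) (- a%:Z)) in E1; last lia.
rewrite (@qdiv (m - k%:Z) (m - (k.+1)%:Z)) in E1; last lia.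
have -> : psi (q ^ (- a%:Z) * t) (q ^ (m - (k.+1)%:Z) * b1) (q ^ (n + (i : nat)%:Z) * b3)
   = (psi (q ^ (- a%:Z) * t) c (q ^ (n + (i : nat)%:Z) * b3)
      - c * psi (q ^ (- (a.+1)%:Z) * t) c (q ^ (n + (i : nat)%:Z) * b3)) / (1 - c).
  rewrite E1; field.
  by rewrite -opprB oppr_eq0.
field.
by rewrite cne -opprB oppr_eq0.
Qed.

Lemma part3 N (m n : int) (t : C) :
  \det (M_hat q b1 b3 psi N m n t) * \prod_(j < N) (q ^ (n + (j : nat)%:Z) * b3) ^+ (N - j.+1)
  = (-1) ^+ ((N * (N - 1)) %/ 2) * \det (M_check q b1 b3 psi N m n t).
Proof.
set G := fun p j : nat => (q ^ (n + j%:Z) * b3) ^+ p *: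
   \col_(i < N) psi (q ^ (p%:Z - (N.-1)%:Z + (i : nat)%:Z) * t) (q ^ m * b1) (q ^ (n + j%:Z) * b3).
have H0 : forall a (Ha : (a < N)%N),
    G 0%N a = col (Ordinal Ha) (revmx _ N *m M_check q b1 b3 psi N m n t).
  move=> a Ha; rewrite revmx_mul; apply/matrixP => i j; rewrite !mxE expr0 mul1r.
  congr psi; apply: qcong; rewrite /=; have := ltn_ord i; lia.
have HS : forall p j, G p.+1 j = G p j + ((q ^ (n + j%:Z) * b3 - 1) / q ^+ p) *: G p j.+1.
  move=> p j; apply/matrixP => i k; rewrite !mxE.
  set c := q ^ (n + j%:Z) * b3.
  case: (hpsi (q ^ (p%:Z - (N.-1)%:Z + (i : nat)%:Z) * t) (q ^ m * b1) c) => _ E2 _ _.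
  rewrite (@qmul (p%:Z - (N.-1)%:Z + (i : nat)%:Z) ((p.+1)%:Z - (N.-1)%:Z + (i : nat)%:Z)) in E2;
    last lia.
  rewrite (@qmul (n + j%:Z) (n + (j.+1)%:Z)) in E2; last lia.
  have Ec : q ^ (n + (j.+1)%:Z) * b3 = q * c by rewrite (@qmul (n + j%:Z) (n + (j.+1)%:Z)) //; lia.
  rewrite Ec in E2 *; rewrite exprS -mulrA [c * (_ * _)]mulrCA E2 [(q * c) ^+ p]exprMn.
  field; by rewrite expf_neq0.
have := @L3 _ N (revmx _ N *m M_check q b1 b3 psi N m n t) G _ H0 HS.
rewrite det_mulmx det_revmx => <-.
have -> : \matrix_(i < N, j < N) G (N.-1 - j)%N j i 0 =
   M_hat q b1 b3 psi N m n t *m diag_mx (\row_(j < N) (q ^ (n + (j : nat)%:Z) * b3) ^+ (N - j.+1)).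
  rewrite mul_mx_diag; apply/matrixP => i j; rewrite !mxE mulrC.
  have -> : (N.-1 - j = N - j.+1)%N by lia.
  congr (_ * _); congr psi.
  rewrite mulrA -(@qz (i : nat)%:Z (- (j : nat)%:Z) ((N - j.+1)%N%:Z - (N.-1)%:Z + (i : nat)%:Z)) //; have := ltn_ord j; lia.
by rewrite det_mulmx det_diag; congr (_ * _); apply: eq_bigr => j _; rewrite mxE.
Qed.

End Main.

Lemma sign_sq (R : realType) (a : nat) : ((-1) ^+ a * (-1) ^+ a : R[i]) = 1.
Proof. by rewrite -exprD addnn -mul2n exprM expr2 mulrNN mul1r expr1n. Qed.

Theorem lemmaA1 (R : realType) (q b1 b3 : R[i]) (psi : R[i] -> R[i] -> R[i] -> R[i])
  (hq : q != 0)
  (hb1 : forall j : int, q ^ j * b1 != 1)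
  (hb3 : forall j : int, q ^ j * b3 != 1)
  (hpsi : psi_relations q psi)
  (N : nat) (m n : int) (t : R[i]) :
  (1 <= N)%N ->
  tau q b1 b3 psi N m n t
    = (\prod_(1 <= k < N)
         ((q ^ (n + k%:Z - 1) * b3) / (q ^ (n + k%:Z - 1) * b3 - 1)) ^+ (N - k))
      * \det (M_tilde q b1 b3 psi N m n t)
  /\
  tau q b1 b3 psi N m n t
    = (\prod_(1 <= k < N)
         ((q ^ (m - k%:Z + 1) * b1) / (q ^ (m - k%:Z + 1) * b1 - 1)) ^+ (N - k))
      * \det (M_check q b1 b3 psi N m n t)
  /\
  tau q b1 b3 psi N m n t
    = (-1) ^+ ((N * (N - 1)) %/ 2)
      * (\prod_(1 <= k < N) (q ^ (n + k%:Z - 1) * b3) ^+ (N - k))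
      * (\prod_(1 <= k < N)
         ((q ^ (m - k%:Z + 1) * b1) / (q ^ (m - k%:Z + 1) * b1 - 1)) ^+ (N - k))
      * \det (M_hat q b1 b3 psi N m n t).
Proof.
move=> _.
have P1 : \prod_(1 <= k < N)
         ((q ^ (n + k%:Z - 1) * b3) / (q ^ (n + k%:Z - 1) * b3 - 1)) ^+ (N - k)
   = \prod_(k < N) \prod_(l < k) ((q ^ (n + l%:Z) * b3) / (q ^ (n + l%:Z) * b3 - 1)).
  rewrite (@prod_tri _ N (fun l : nat => (q ^ (n + l%:Z) * b3) / (q ^ (n + l%:Z) * b3 - 1))) -(@reindex_prod _ N (fun l : nat => (q ^ (n + l%:Z) * b3) / (q ^ (n + l%:Z) * b3 - 1))) //.
  by move=> l; rewrite (_ : n + (l.+1)%:Z - 1 = n + l%:Z) //; lia.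
have P2 : \prod_(1 <= k < N)
         ((q ^ (m - k%:Z + 1) * b1) / (q ^ (m - k%:Z + 1) * b1 - 1)) ^+ (N - k)
   = \prod_(k < N) \prod_(l < k) ((q ^ (m - l%:Z) * b1) / (q ^ (m - l%:Z) * b1 - 1)).
  rewrite (@prod_tri _ N (fun l : nat => (q ^ (m - l%:Z) * b1) / (q ^ (m - l%:Z) * b1 - 1))) -(@reindex_prod _ N (fun l : nat => (q ^ (m - l%:Z) * b1) / (q ^ (m - l%:Z) * b1 - 1))) //.
  by move=> l; rewrite (_ : m - (l.+1)%:Z + 1 = m - l%:Z) //; lia.
have P3 : \prod_(1 <= k < N) (q ^ (n + k%:Z - 1) * b3) ^+ (N - k)
   = \prod_(j < N) (q ^ (n + (j : nat)%:Z) * b3) ^+ (N - j.+1).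
  rewrite -(@reindex_prod _ N (fun l : nat => q ^ (n + l%:Z) * b3)) //.
  by move=> l; rewrite (_ : n + (l.+1)%:Z - 1 = n + l%:Z) //; lia.
rewrite /tau P1 P2 P3.
split; first exact: part1.
split; first exact: part2.
rewrite (@part2 _ _ _ _ _ hq hb1 hpsi).
have E3 := @part3 R q b1 b3 psi hq hpsi N m n t.
move: E3.
set s := (-1) ^+ _; set Mh := \det (M_hat _ _ _ _ _ _ _ _); set Mc := \det (M_check _ _ _ _ _ _ _ _).
set p3 := \prod_(j < N) (q ^ (n + (j : nat)%:Z) * b3) ^+ (N - j.+1).
set p1 := \prod_(k < N) _ => E3.
have -> : s * p3 * p1 * Mh = p1 * s * (Mh * p3) by ring.
by rewrite E3 mulrA -[p1 * s * s]mulrA sign_sq mulr1.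
Qed.
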